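(* For all $n\ge 2$, \[\left|\mathrm{Av}_n[\overline{23}14]\right|=\sum_{i=0}^{n-2}\binom{n-2}{i}A_i,\] where $A_i$ is the number of strongly monotone partitions of $[i]$ (with $A_0=1$).
   Context: For $\sigma\in S_n$, the cyclic permutation $[\sigma]$ is the set of all rotations of $\sigma$; $[S_n]$ is the set of cyclic permutations of length $n$. $[\sigma]$ contains the vincular pattern $[\overline{23}14]$ if some rotation of $\sigma$ has entries $a,b,c,d$ appearing in this order with $a,b$ adjacent and $c<a<b<d$; $\mathrm{Av}_n[\overline{23}14]$ is the set of $[\sigma]\in[S_n]$ not containing it. A set partition of $[i]$ is strongly monotone if, when its blocks are sorted so that their minimum elements are increasing, their maximum elements are also increasing. *)

(* Defs.v *)
From mathcomp Require Import all_boot all_order all_fingroup.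
Set Implicit Arguments. Unset Strict Implicit. Unset Printing Implicit Defensive.

(* A permutation s : 'S_n is identified with the word s(0) s(1) ... s(n-1)
   (values in {0,..,n-1}; shifting to {1..n} does not affect patterns). *)

Definition cshift n : 'S_n := perm (@ordS_inj n).

(* k-th rotation of s: the word s(k) s(k+1) ... s(n-1) s(0) ... s(k-1);
   recall (a * b) x = b (a x) for permutations *)
Definition rotation n (k : nat) (s : 'S_n) : 'S_n := (cshift n ^+ k * s)%g.

Definition cyc n (s : 'S_n) : {set 'S_n} := [set rotation (val k) s | k : 'I_n].

(* the word s contains the vincular pattern 23-1-4 (with 2,3 adjacent):
   positions i < i+1 < k < l with s k < s i < s (i+1) < s l *)
Definition contains_2314 n (s : 'S_n) : bool :=
  [exists i : 'I_n, exists j : 'I_n, exists k : 'I_n, exists l : 'I_n,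
     [&& val j == (val i).+1, j < k, k < l,
         s k < s i, s i < s j & s j < s l]].

Definition cyc_contains n (s : 'S_n) : bool :=
  [exists t in cyc s, contains_2314 t].

Definition Av_cyc n : {set {set 'S_n}} :=
  [set cyc s | s in [set s : 'S_n | ~~ cyc_contains s]].

Definition bmin i (B : {set 'I_i}) : nat := \big[minn/i]_(x in B) val x.
Definition bmax i (B : {set 'I_i}) : nat := \max_(x in B) val x.

Definition strongly_monotone i (P : {set {set 'I_i}}) : bool :=
  [forall B in P, forall C in P, (bmin B < bmin C) ==> (bmax B < bmax C)].

Definition A_sm (i : nat) : nat :=
  #|[set P : {set {set 'I_i}} | partition P [set: 'I_i] && strongly_monotone P]|.

(* Main.v *)
Require Import Defs.
From mathcomp Require Import all_boot all_order all_fingroup.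
From mathcomp Require Import zify.
Set Implicit Arguments. Unset Strict Implicit. Unset Printing Implicit Defensive.

Module PartAC.
Import GroupScope.

Section PartA.
Variable m : nat.
Local Notation n := m.+2.

Lemma cshiftX_val k (x : 'I_n) : val ((cshift n ^+ k) x) = (x + k) %% n.
Proof.
elim: k => [|k IH]; first by rewrite expg0 perm1 addn0 modn_small.
by rewrite expgSr permM /cshift permE /= IH -addn1 modnDml addn1 addnS.
Qed.

Lemma cshiftXn : cshift n ^+ n = 1.
Proof.
apply/permP => x; apply: val_inj; rewrite cshiftX_val perm1 modnDr modn_small //.
Qed.

Lemma cshiftX_mod k : cshift n ^+ k = cshift n ^+ (k %% n).
Proof.
by rewrite {1}(divn_eq k n) expgD mulnC expgM cshiftXn expg1n mul1g.
Qed.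

Lemma rotationD a b (s : 'S_n) : rotation a (rotation b s) = rotation (b + a) s.
Proof. by rewrite /rotation mulgA -expgD addnC. Qed.

Lemma rotation_mod k (s : 'S_n) : rotation k s = rotation (k %% n) s.
Proof. by rewrite /rotation -cshiftX_mod. Qed.

Lemma rotation0 (s : 'S_n) : rotation 0 s = s.
Proof. by rewrite /rotation expg0 mul1g. Qed.

Lemma rotationE k (s : 'S_n) x : rotation k s x = s ((cshift n ^+ k) x).
Proof. by rewrite /rotation permM. Qed.

Lemma cyc_sub k (s : 'S_n) : cyc (rotation k s) \subset cyc s.
Proof.
apply/subsetP => t /imsetP [j _ ->].
apply/imsetP; exists (Ordinal (ltn_pmod (k + j) (isT : 0 < n))) => //.
by rewrite rotationD rotation_mod.
Qed.

Lemma cyc_rot k (s : 'S_n) : cyc (rotation k s) = cyc s.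
Proof.
apply/eqP; rewrite eqEsubset cyc_sub /=.
have e : rotation (n - k %% n) (rotation k s) = s.
  rewrite rotationD rotation_mod.
  have -> : (k + (n - k %% n)) %% n = 0.
    rewrite {1}(divn_eq k n) -addnA subnKC; last by apply: ltnW; rewrite ltn_mod.
    by rewrite -mulSnr modnMl.
  by rewrite rotation0.
by rewrite -{1}e cyc_sub.
Qed.

Lemma cyc_contains_rot k (s : 'S_n) : cyc_contains (rotation k s) = cyc_contains s.
Proof. by rewrite /cyc_contains cyc_rot. Qed.

Lemma mem_cyc_self (s : 'S_n) : s \in cyc s.
Proof. by apply/imsetP; exists ord0 => //; rewrite rotation0. Qed.

Definition Rset := [set s : 'S_n | (s ord_max == ord_max) && ~~ cyc_contains s].

Lemma card_Av : #|Av_cyc n| = #|Rset|.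
Proof.
have -> : Av_cyc n = (@cyc n) @: Rset.
  apply/eqP; rewrite eqEsubset; apply/andP; split; apply/subsetP => C /imsetP [s].
  - rewrite inE => hs ->.
    pose p := (s^-1 ord_max).
    have hr : rotation p.+1 s ord_max = ord_max.
      rewrite rotationE; have -> : (cshift n ^+ p.+1) ord_max = p.
        by apply: val_inj; rewrite cshiftX_val /= addnS -addSn modnDl modn_small.
      by rewrite permKV.
    apply/imsetP; exists (rotation p.+1 s); last by rewrite cyc_rot.
    by rewrite inE hr eqxx cyc_contains_rot.
  - rewrite inE => /andP [_ hs] ->; apply/imsetP; exists s => //; by rewrite inE.
rewrite card_in_imset // => s t; rewrite !inE => /andP [/eqP hs _] /andP [/eqP ht _] e.
have : t \in cyc s by rewrite e mem_cyc_self.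
case/imsetP => j _ et; rewrite et in ht *; clear et e.
have hj : (cshift n ^+ j) ord_max = ord_max.
  by apply: (@perm_inj _ s); rewrite -rotationE ht hs.
have : val j = 0.
  move: hj => /(congr1 val); rewrite cshiftX_val /=.
  clear ht; case: j => [[|j]] //= hj.
  rewrite addnS -addSn modnDl modn_small; first lia.
  lia.
by move=> j0; rewrite j0 rotation0.
Qed.

End PartA.

Lemma modP x n : 0 < n -> x < n + n -> x %% n = if x < n then x else x - n.
Proof.
move=> n0 hx; case: ifP => h; first by rewrite modn_small.
have hx' : n <= x by rewrite leqNgt h.
by rewrite -{1}(subnK hx') modnDr modn_small; lia.
Qed.

Lemma rot_arith n k i c d : k < n -> i.+1 < c -> c < d -> d < n ->
  let P x := (x + k) %% n in
  ((P i.+1 = (P i).+1 /\ P i.+1 < P c) \/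
   (P i.+1 = (P i).+1 /\ P c < P d /\ P d < P i)) \/ P i = n.-1.
Proof.
move=> hk h1 h2 h3 P; rewrite /P.
have n0 : 0 < n by lia.
rewrite !modP //; try lia.
case: ifP => ha; case: ifP => hb; case: ifP => hc; case: ifP => hd; lia.
Qed.

Section PartB.
Variable m : nat.
Local Notation n := m.+2.

Definition L1 (s : 'S_n) := forall i j c : 'I_n,
  (j : nat) = (i : nat).+1 -> j < c -> s i < s j -> s i < s c.
Definition L2 (s : 'S_n) := forall c d i j : 'I_n,
  (j : nat) = (i : nat).+1 -> c < d -> d < i -> s c < s i -> s i < s j -> s d < s j.

Lemma perm_neq (s : 'S_n) x y : x != y -> (s x : nat) != s y.
Proof. by move=> h; apply: contra h => /eqP /val_inj /perm_inj ->. Qed.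

Lemma lt_notmax (s : 'S_n) (x y : 'I_n) : s ord_max = ord_max -> s x < s y -> (x : nat) < m.+1.
Proof.
move=> hs h; have := ltn_ord x; rewrite ltnS leq_eqVlt => /orP [/eqP e|] //.
have ex : x = ord_max by apply: val_inj.
by move: h; rewrite ex hs /=; have := ltn_ord (s y); lia.
Qed.

Lemma val_notmax (s : 'S_n) (x : 'I_n) : s ord_max = ord_max -> (x : nat) < m.+1 -> s x < m.+1.
Proof.
move=> hs hx; have := ltn_ord (s x); rewrite ltnS leq_eqVlt => /orP [/eqP e|] //.
have : s x = s ord_max by rewrite hs; apply: val_inj.
by move/perm_inj => ex; move: hx; rewrite ex /=; lia.
Qed.

Lemma B1 (s : 'S_n) : s ord_max = ord_max -> ~~ cyc_contains s -> L1 s.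
Proof.
move=> hs hc i j c hj hjc hij; rewrite ltnNge leq_eqVlt; apply/negP => /orP [e|hci].
  have cni : c != i by apply/eqP => ec; move: hjc; rewrite ec; lia.
  by rewrite (negbTE (perm_neq s cni)) in e.
move/negP: hc; apply; apply/existsP; exists s; rewrite mem_cyc_self /=.
apply/existsP; exists i; apply/existsP; exists j; apply/existsP; exists c;
apply/existsP; exists ord_max.
rewrite hjc hci hij hs /= hj eqxx /=.
have := lt_notmax hs hci => hc.
rewrite hc /=; apply: (val_notmax hs); lia.
Qed.

Lemma B2 (s : 'S_n) : ~~ cyc_contains s -> L2 s.
Proof.
move=> hc c d i j hj hcd hdi hci hij; rewrite ltnNge leq_eqVlt; apply/negP => /orP [e|hjd].
  have cni : j != d by apply/eqP => ec; move: hdi; rewrite -ec; lia.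
  by rewrite (negbTE (perm_neq s cni)) in e.
move/negP: hc; apply; apply/existsP; exists (rotation i s).
have hi := ltn_ord i; have hjn := ltn_ord j.
have -> : rotation i s \in cyc s by apply/imsetP; exists i.
rewrite /=.
have o0 : 0 < n by [].
have o1 : 1 < n by [].
have oc : n - i + c < n by lia.
have od : n - i + d < n by lia.
pose x0 := Ordinal o0; pose x1 := Ordinal o1; pose xc := Ordinal oc; pose xd := Ordinal od.
have e0 : (cshift n ^+ i) x0 = i by apply: val_inj; rewrite cshiftX_val /= modn_small.
have e1 : (cshift n ^+ i) x1 = j.
  by apply: val_inj; rewrite cshiftX_val /= hj add1n modn_small // -hj.
have ec : (cshift n ^+ i) xc = c.
  apply: val_inj; rewrite cshiftX_val /=.
  have -> : n - i + c + i = c + n by lia.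
  by rewrite modnDr modn_small.
have ed : (cshift n ^+ i) xd = d.
  apply: val_inj; rewrite cshiftX_val /=.
  have -> : n - i + d + i = d + n by lia.
  by rewrite modnDr modn_small.
apply/existsP; exists x0; apply/existsP; exists x1;
apply/existsP; exists xc; apply/existsP; exists xd.
rewrite !rotationE e0 e1 ec ed hci hij hjd /=.
apply/and3P; split => //; lia.
Qed.

Lemma B3 (s : 'S_n) : s ord_max = ord_max -> L1 s -> L2 s -> ~~ cyc_contains s.
Proof.
move=> hs h1 h2; apply/negP => /existsP [t /andP [/imsetP [k _ ->]]].
move=> /existsP [i /existsP [j /existsP [c /existsP [d]]]].
case/and4P => /eqP hj hjc hcd /and3P [hci hij hjd].
move: hci hij hjd; rewrite !rotationE.
set a := (cshift n ^+ k) i; set b := (cshift n ^+ k) j;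
set c' := (cshift n ^+ k) c; set d' := (cshift n ^+ k) d.
move=> hci hij hjd.
have {}hj : (j : nat) = (i : nat).+1 := hj.
have := @rot_arith n k i c d (ltn_ord k) ltac:(lia) hcd (ltn_ord d).
rewrite /= -hj -!cshiftX_val -/a -/b -/c' -/d'.
case => [[[e1 e2]|[e1 [e2 e3]]]|e].
- by have := h1 a b c' e1 e2 hij; lia.
- by have := h2 c' d' a b e1 e2 e3 hci hij; lia.
- have e' : (a : nat) = n.-1 := e; have := lt_notmax hs hij; lia.
Qed.

End PartB.

Section BminMax.
Variable i : nat.
Implicit Types (B : {set 'I_i}) (x : 'I_i).

Lemma bmin_le B x : x \in B -> bmin B <= x.
Proof.
move=> xB; rewrite /bmin -big_filter.
have : x \in [seq y <- index_enum 'I_i | y \in B] by rewrite mem_filter xB mem_index_enum.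
elim: [seq y <- _ | _] => [|a r IH] //=.
by rewrite big_cons in_cons => /orP [/eqP ->|/IH h]; [rewrite geq_minl | rewrite geq_min h orbT].
Qed.

Lemma bmin_mem B : B != set0 -> exists2 x, x \in B & bmin B = x.
Proof.
case/set0Pn => y yB.
have H : forall r : seq 'I_i, (\big[minn/i]_(z <- r) val z = i) \/
           exists2 x, x \in r & \big[minn/i]_(z <- r) val z = x.
  elim => [|a r IH]; first by left; rewrite big_nil.
  rewrite big_cons /minn; case: ifP => _; first by right; exists a; rewrite ?mem_head.
  by case: IH => [e|[x xr e]]; [left | right; exists x; rewrite ?in_cons ?xr ?orbT].
have := H [seq z <- index_enum 'I_i | z \in B]; rewrite big_filter -/(bmin B).
case => [e|[x]]; last by rewrite mem_filter => /andP [xB _] e; exists x.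
by have := bmin_le yB; rewrite e leqNgt ltn_ord.
Qed.

Lemma bmax_ge B x : x \in B -> x <= bmax B.
Proof. by move=> xB; rewrite /bmax; apply: (leq_bigmax_cond x). Qed.

Lemma bmax_mem B : B != set0 -> exists2 x, x \in B & bmax B = x.
Proof.
move=> h; have : 0 < #|B| by rewrite card_gt0.
by case/(eq_bigmax_cond val) => x xB e; exists x.
Qed.

Lemma bmax_le B k : (forall x, x \in B -> x <= k) -> bmax B <= k.
Proof. by move=> h; apply/bigmax_leqP => x; apply: h. Qed.

Lemma bmin_ge B k : B != set0 -> (forall x, x \in B -> k <= x) -> k <= bmin B.
Proof. by move=> h0 h; case: (bmin_mem h0) => x xB ->; apply: h. Qed.

End BminMax.

Section Rank.
Variable n : nat.
Variable f : 'I_n -> nat.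

Definition prec (w v : 'I_n) := (f w < f v) || ((f w == f v) && (v < w)).

Lemma prec_irr v : ~~ prec v v.
Proof. by rewrite /prec ltnn eqxx ltnn. Qed.

Lemma prec_trans u v w : prec u v -> prec v w -> prec u w.
Proof.
rewrite /prec => /orP [h1|/andP [/eqP e1 h1]] /orP [h2|/andP [/eqP e2 h2]];
apply/orP; lia.
Qed.

Lemma prec_tot v w : v != w -> prec v w || prec w v.
Proof.
move=> h; rewrite /prec.
have : (v : nat) != w by apply: contra h => /eqP /val_inj ->.
case: (ltngtP (f v) (f w)) => //= e; rewrite ?e ?eqxx /=; lia.
Qed.

Lemma prec_asym v w : prec v w -> ~~ prec w v.
Proof. by move=> h; apply/negP => h'; have := prec_irr v; rewrite (prec_trans h h'). Qed.

Definition rank (v : 'I_n) := #|[set w | prec w v]|.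

Lemma rank_lt v w : prec v w -> rank v < rank w.
Proof.
move=> h; apply: proper_card; rewrite properEneq; apply/andP; split.
  apply/eqP => e; have : v \in [set w0 | prec w0 w] by rewrite inE.
  by rewrite -e inE (negbTE (prec_irr v)).
by apply/subsetP => u; rewrite !inE => hu; apply: prec_trans hu h.
Qed.

Lemma rank_ltE v w : (rank v < rank w) = prec v w.
Proof.
apply/idP/idP => [h|]; last exact: rank_lt.
case: (eqVneq v w) => [e|ne]; first by move: h; rewrite e ltnn.
case/orP: (prec_tot ne) => // h'.
by have := rank_lt h'; rewrite ltnNge ltnW.
Qed.

Lemma rank_inj : injective rank.
Proof.
move=> v w e; apply/eqP; apply/negP => /negP ne.
by case/orP: (prec_tot ne) => /rank_lt; rewrite e ltnn.
Qed.

Lemma rank_bound v : rank v < n.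
Proof.
rewrite -[n in _ < n]card_ord -cardsT; apply: proper_card; rewrite properE subsetT /=.
by apply/subsetPn; exists v; rewrite ?inE // prec_irr.
Qed.

Definition rankO v : 'I_n := Ordinal (rank_bound v).

Lemma rankO_inj : injective rankO.
Proof. by move=> v w /(congr1 val) /rank_inj. Qed.

Definition phi : 'S_n := (perm rankO_inj)^-1.

Lemma phi_inv v : phi^-1 v = rankO v.
Proof. by rewrite /phi invgK permE. Qed.

Lemma phi_posE v w : (phi^-1 v < phi^-1 w) = prec v w.
Proof. by rewrite !phi_inv /= rank_ltE. Qed.

End Rank.

Lemma card_pos_lt n (s : 'S_n) k : k <= n -> #|[set w | s^-1 w < k]| = k.
Proof.
move=> hk.
have -> : [set w | s^-1 w < k] = s @: [set widen_ord hk j | j : 'I_k].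
  apply/setP => w; rewrite inE; apply/idP/imsetP => [h|[p /imsetP [j _ ->] ->]].
    exists (s^-1 w); last by rewrite permKV.
    by apply/imsetP; exists (Ordinal h) => //; apply: val_inj.
  by rewrite permK /=.
rewrite card_imset; last exact: perm_inj.
rewrite card_imset ?card_ord //.
by move=> a b e; apply: val_inj; move: (congr1 val e).
Qed.

Section Runs.
Variable m : nat.
Local Notation n := m.+2.
Variable s : 'S_n.

Definition sv t : nat := s (inord t).
Definition asc t := (t.+1 < n) && (sv t < sv t.+1).
Definition runid p := count asc (iota 0 p).
Definition pos (v : 'I_n) : nat := s^-1 v.
Definition rid v := runid (pos v).

Lemma svE (o : 'I_n) : sv o = s o.
Proof. by rewrite /sv inord_val. Qed.

Lemma sv_pos v : sv (pos v) = v.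
Proof. by rewrite /pos svE permKV. Qed.

Lemma pos_lt v : pos v < n.
Proof. exact: ltn_ord. Qed.

Lemma sv_lt t : sv t < n.
Proof. exact: ltn_ord. Qed.

Lemma sv_inj t1 t2 : t1 < n -> t2 < n -> sv t1 = sv t2 -> t1 = t2.
Proof.
by move=> h1 h2 /val_inj /perm_inj e; rewrite -(inordK h1) -(inordK h2) e.
Qed.

Lemma pos_sv t : t < n -> pos (s (inord t)) = t.
Proof. by move=> h; rewrite /pos permK inordK. Qed.

Lemma runidS p : runid p.+1 = runid p + asc p.
Proof. by rewrite /runid -addn1 iotaD count_cat /= addn0. Qed.

Lemma runid_add p d : runid (p + d) = runid p + count asc (iota p d).
Proof. by rewrite /runid iotaD count_cat. Qed.

Lemma runid_mono p q : p <= q -> runid p <= runid q.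
Proof. by move=> h; rewrite -(subnKC h) runid_add leq_addr. Qed.

Lemma count_iota0 p d : (count asc (iota p d) == 0) = [forall t : 'I_d, ~~ asc (p + t)].
Proof.
elim: d p => [|d IH] p; first by apply/esym/forallP => [[]].
rewrite /= addn_eq0 IH; apply/andP/forallP => [[h1 /forallP h2] t|h].
  case: t => [[|t] ht]; first by move: h1; rewrite addn0; case: (asc p).
  by have := h2 (Ordinal (ltnSE ht)); rewrite /= addSnnS.
split; first by have := h ord0; rewrite addn0 eqb0.
by apply/forallP => t; have := h (lift ord0 t); rewrite /= addSnnS.
Qed.

Lemma runid_eqP' p d :
  reflect (forall t, p <= t -> t < p + d -> ~~ asc t) (runid p == runid (p + d)).
Proof.
rewrite runid_add -{1}(addn0 (runid p)) eqn_add2l eq_sym count_iota0.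
apply: (iffP forallP) => [H t h1 h2|H t].
  have ht : t - p < d by lia.
  by have := H (Ordinal ht); rewrite /= subnKC.
apply: H; [exact: leq_addr | rewrite ltn_add2l; exact: ltn_ord].
Qed.

Lemma runid_eqP p q : p <= q ->
  reflect (forall t, p <= t -> t < q -> ~~ asc t) (runid p == runid q).
Proof. by move=> h; rewrite -(subnKC h); apply: runid_eqP'. Qed.

Lemma runid_step p q : p <= q -> runid p < runid q ->
  exists t, [/\ p <= t, t < q, asc t & runid t = runid p].
Proof.
move=> h; rewrite -(subnKC h); elim: (q - p) => [|d IH]; first by rewrite addn0 ltnn.
rewrite addnS runidS.
case: (ltnP (runid p) (runid (p + d))) => [/IH [t [h1 h2 h3 h4]] _|h'].
  by exists t; split => //; lia.
have e : runid (p + d) = runid p by apply/eqP; rewrite eqn_leq h' runid_mono ?leq_addr.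
rewrite e; case hasc : (asc (p + d)); last by rewrite addn0 ltnn.
by move=> _; exists (p + d); split => //; lia.
Qed.

Lemma desc_run p q : p <= q -> q < n -> runid p = runid q -> sv q <= sv p.
Proof.
move=> h hq /eqP /(runid_eqP h) H; move: hq H; rewrite -(subnKC h).
elim: (q - p) => [|d IH] hq H; first by rewrite addn0.
have h1 : sv (p + d).+1 <= sv (p + d).
  have hq' : (p + d).+1 < n by rewrite -addnS.
  by have := H (p + d) (leq_addr _ _) ltac:(lia); rewrite /asc hq' /= -leqNgt.
rewrite addnS; apply: leq_trans h1 _; apply: IH; first lia.
by move=> t ht1 ht2; apply: H; lia.
Qed.

Lemma desc_run_lt p q : p < q -> q < n -> runid p = runid q -> sv q < sv p.
Proof.
move=> h hq e; have := desc_run (ltnW h) hq e; rewrite leq_eqVlt => /orP [/eqP e'|] //.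
have hp : p < n by lia.
by have := sv_inj hq hp e'; lia.
Qed.

Lemma runid0 : runid 0 = 0.
Proof. by []. Qed.

Definition Psi := preim_partition rid [set: 'I_n].

Lemma Psi_partition : partition Psi [set: 'I_n].
Proof. exact: preim_partitionP. Qed.

Lemma mem_pblock_Psi x y : (y \in pblock Psi x) = (rid x == rid y).
Proof.
rewrite /Psi /preim_partition pblock_equivalence_partition ?inE //.
by split => // /eqP ->.
Qed.

End Runs.

Definition mb n (Q : {set {set 'I_n}}) x := bmin (pblock Q x).
Definition Mb n (Q : {set {set 'I_n}}) x := bmax (pblock Q x).

Section PsiGood.
Variable m : nat.
Local Notation n := m.+2.
Variable s : 'S_n.
Hypothesis hs : s ord_max = ord_max.
Hypothesis l1 : L1 s.
Hypothesis l2 : L2 s.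

Local Notation Q := (Psi s).

Lemma l1sv t c : asc s t -> t.+1 < c -> c < n -> sv s t < sv s c.
Proof.
move=> /andP [ht ha] hc hcn.
have := l1 (i := inord t) (j := inord t.+1) (c := inord c).
rewrite /sv in ha *; rewrite !inordK //; try lia.
Qed.

Lemma Psi_cover x : x \in cover Q.
Proof. by rewrite (cover_partition (Psi_partition s)). Qed.

Lemma Psi_triv : trivIset Q.
Proof. exact: partition_trivIset (Psi_partition s). Qed.

Lemma Psi_self x : x \in pblock Q x.
Proof. by rewrite mem_pblock Psi_cover. Qed.

Lemma Psi_pblock_eq x y : (pblock Q x == pblock Q y) = (rid s x == rid s y).
Proof. by rewrite eq_pblock ?Psi_triv ?Psi_cover // mem_pblock_Psi. Qed.

Lemma Psi_ne0 x : pblock Q x != set0.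
Proof. by apply/set0Pn; exists x; apply: Psi_self. Qed.

Lemma K1 v w : rid s v < rid s w -> mb Q v < mb Q w.
Proof.
move=> h.
have hpq : pos s v <= pos s w.
  by rewrite leqNgt; apply/negP => /ltnW /(runid_mono s); rewrite /rid in h; lia.
have [t [h1 h2 h3 h4]] := runid_step hpq h.
have htn : t < n by have := pos_lt s w; lia.
have hx : s (inord t) \in pblock Q v.
  by rewrite mem_pblock_Psi /rid pos_sv // h4.
apply: (leq_ltn_trans (bmin_le hx)); rewrite -/(sv s t).
apply: bmin_ge; first exact: Psi_ne0.
move=> u; rewrite mem_pblock_Psi => /eqP hu; rewrite /rid in h hu.
have hpu : t < pos s u.
  rewrite ltnNge; apply/negP => /(runid_mono s); lia.
rewrite -(sv_pos s u).
case: (ltngtP (pos s u) t.+1) => hh; first lia.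
  by apply: l1sv => //; exact: pos_lt.
by rewrite hh; move: h3 => /andP [].
Qed.

Lemma Psi_prec v w : prec (mb Q) w v = (pos s w < pos s v).
Proof.
rewrite /prec.
case: (ltngtP (rid s w) (rid s v)) => h.
- rewrite K1 //=; apply/esym; rewrite ltnNge; apply/negP => hh.
  have := runid_mono s hh; rewrite /rid in h; lia.
- have hk := K1 h; rewrite ltnNge (ltnW hk) /= (gtn_eqF hk) /=.
  apply/esym/negbTE/negP => hh; have := runid_mono s (ltnW hh); rewrite /rid in h; lia.
- have e : pblock Q w = pblock Q v by apply/eqP; rewrite Psi_pblock_eq h.
  rewrite /mb e ltnn eqxx /=.
  case: (ltngtP (pos s w) (pos s v)) => hp.
  + by have := desc_run_lt hp (pos_lt s v) h; rewrite !sv_pos => ->.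
  + have := desc_run_lt hp (pos_lt s w) (esym h); rewrite !sv_pos => hh; apply/negbTE; lia.
  + have -> : w = v by apply: (@perm_inj _ s^-1); apply: val_inj.
    by rewrite ltnn.
Qed.

Lemma l2sv c d i : c < d -> d < i -> i.+1 < n -> sv s c < sv s i -> sv s i < sv s i.+1 ->
  sv s d < sv s i.+1.
Proof.
move=> h1 h2 h3 h4 h5.
have := l2 (c := inord c) (d := inord d) (i := inord i) (j := inord i.+1).
rewrite /sv in h4 h5 *; rewrite !inordK //; try lia.
Qed.

Lemma Psi_max : [set ord_max] \in Q.
Proof.
have e : pblock Q ord_max = [set ord_max].
  apply/setP => y; rewrite mem_pblock_Psi inE.
  have pm : pos s ord_max = m.+1 by rewrite /pos -{1}hs permK.
  case: (eqVneq y ord_max) => [->|ne]; first by rewrite eqxx.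
  apply/negbTE; rewrite /rid pm.
  have hy : pos s y < m.+1.
    have := pos_lt s y; rewrite ltnS leq_eqVlt => /orP [/eqP e|] //.
    have : y = ord_max by rewrite -(permKV s y) -hs; congr (s _); apply: val_inj.
    by move/eqP: ne.
  have ha : asc s m.
    rewrite /asc ltnSn /=.
    have -> : sv s m.+1 = m.+1 by rewrite /sv (_ : inord m.+1 = ord_max) ?hs //; apply: val_inj; rewrite /= inordK.
    have := sv_lt s m; rewrite ltnS leq_eqVlt => /orP [/eqP e'|] //.
    have := @sv_inj _ s m m.+1 ltac:(lia) ltac:(lia).
    rewrite e' /sv (_ : inord m.+1 = ord_max) ?hs; last by apply: val_inj; rewrite /= inordK.
    by move=> H; have := H erefl; lia.
  have := runid_mono s (hy : pos s y <= m); rewrite runidS ha; lia.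
by rewrite -e; apply: pblock_mem; apply: Psi_cover.
Qed.

Lemma run_start u : exists f, [/\ f <= pos s u, runid s f = rid s u &
  forall p, p < f -> runid s p != rid s u].
Proof.
have ex : exists p, runid s p == rid s u by exists (pos s u).
case: (ex_minnP ex) => f /eqP hf hmin; exists f; split => //.
  by apply: hmin; rewrite eqxx.
by move=> p hp; apply/negP => /hmin; lia.
Qed.

Lemma Mb_start u f : f <= pos s u -> runid s f = rid s u ->
  (forall p, p < f -> runid s p != rid s u) -> Mb Q u = sv s f.
Proof.
move=> h1 h2 h3; have hf : f < n by have := pos_lt s u; lia.
apply/eqP; rewrite eqn_leq; apply/andP; split.
  apply: bmax_le => u'; rewrite mem_pblock_Psi => /eqP hu'.
  have hp : f <= pos s u'.
    by rewrite leqNgt; apply/negP => /h3; rewrite hu' /rid eqxx.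
  by rewrite -(sv_pos s u'); apply: desc_run => //; [exact: pos_lt | rewrite h2 hu'].
have hx : s (inord f) \in pblock Q u by rewrite mem_pblock_Psi /rid pos_sv // h2.
exact: (bmax_ge hx).
Qed.

Lemma rid_lt_of_mb v w : mb Q v < mb Q w -> rid s v < rid s w.
Proof.
move=> h; case: (ltngtP (rid s v) (rid s w)) => // h'.
  by have := K1 h'; lia.
have e : pblock Q v = pblock Q w by apply/eqP; rewrite Psi_pblock_eq h'.
by move: h; rewrite /mb e ltnn.
Qed.

Lemma Psi_sm v w : ord0 \notin pblock Q v -> mb Q v < mb Q w -> Mb Q v < Mb Q w.
Proof.
move=> h0 h.
have hvw := rid_lt_of_mb h.
have h0v : rid s ord0 < rid s v.
  case: (ltngtP (rid s ord0) (rid s v)) => // h'.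
    have := K1 h'; have := bmin_le (Psi_self ord0); rewrite -/(mb Q ord0) /=; lia.
  by move: h0; rewrite mem_pblock_Psi h' eqxx.
have [g [g1 g2 g3]] := run_start v.
have [f [f1 f2 f3]] := run_start w.
rewrite (Mb_start g1 g2 g3) (Mb_start f1 f2 f3).
have hfn : f < n by have := pos_lt s w; lia.
have hgn : g < n by have := pos_lt s v; lia.
have hgf : g < f.
  rewrite ltnNge; apply/negP => /(runid_mono s); rewrite f2 g2; lia.
case: f f1 f2 f3 hfn hgf => [|i] f1 f2 f3 hfn hgf; first lia.
have ha : asc s i.
  have := f3 i (ltnSn i); rewrite -f2 runidS; case: (asc s i) => //; rewrite addn0 eqxx.
  done.
rewrite ltnNge; apply/negP => hle.
have hlt : sv s i.+1 < sv s g.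
  rewrite ltn_neqAle hle andbT; apply/negP => /eqP /(sv_inj hfn hgn); lia.
have hgi : g < i.
  rewrite ltn_neqAle; apply/andP; split; last lia.
  apply/negP => /eqP e; rewrite e in hlt; move: ha => /andP [_ hh]; lia.
have hcg : pos s ord0 < g.
  rewrite ltnNge; apply/negP => /(runid_mono s); rewrite g2 /rid; rewrite /rid in h0v; lia.
have hci : sv s (pos s ord0) < sv s i.
  rewrite sv_pos /=; rewrite lt0n; apply/negP => /eqP e.
  have : sv s i = sv s (pos s ord0) by rewrite sv_pos e.
  have hin : i < n by lia.
  move/(sv_inj hin (pos_lt s ord0)) => hh; lia.
have := l2sv hcg hgi hfn hci; move: ha => /andP [_ ha] H; have := H ha; lia.
Qed.

End PsiGood.

Definition good m (Q : {set {set 'I_m.+2}}) :=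
  [&& partition Q [set: 'I_m.+2], [set ord_max] \in Q &
   [forall B in Q, forall C in Q,
      ((ord0 \notin B) && (bmin B < bmin C)) ==> (bmax B < bmax C)]].

Lemma phi_eq n f (s : 'S_n) : (forall v w, prec f w v = (s^-1 w < s^-1 v)) -> phi f = s.
Proof.
move=> H.
have e : (phi f)^-1 = s^-1.
  apply/permP => v; apply: val_inj; rewrite phi_inv /= /rank.
  rewrite (eq_card (B := [set w | s^-1 w < s^-1 v])); first by rewrite card_pos_lt // ltnW.
  by move=> w; rewrite !inE H.
by rewrite -[phi f]invgK e invgK.
Qed.

Lemma block_of n (Q : {set {set 'I_n}}) B : partition Q [set: 'I_n] -> B \in Q ->
  exists v, B = pblock Q v.
Proof.
move=> hp hB; have /set0Pn [v hv] : B != set0 by apply: partition_neq0 hp hB.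
by exists v; rewrite (def_pblock (partition_trivIset hp) hB hv).
Qed.

Lemma Psi_good m (s : 'S_m.+2) : s ord_max = ord_max -> L1 s -> L2 s -> good (Psi s).
Proof.
move=> hs l1 l2; rewrite /good Psi_partition Psi_max //=.
apply/forallP => B; apply/implyP => hB; apply/forallP => C; apply/implyP => hC.
have [v ->] := block_of (Psi_partition s) hB.
have [w ->] := block_of (Psi_partition s) hC.
apply/implyP => /andP [h0 h]; exact: (Psi_sm l1 l2 h0 h).
Qed.

Lemma Phi_Psi m (s : 'S_m.+2) : s ord_max = ord_max -> L1 s -> L2 s ->
  phi (mb (Psi s)) = s.
Proof. by move=> hs l1 l2; apply: phi_eq => v w; rewrite (Psi_prec l1). Qed.

Section PhiSide.
Variable m : nat.
Local Notation n := m.+2.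
Variable Q : {set {set 'I_n}}.
Hypothesis hg : good Q.

Let Qp : partition Q [set: 'I_n].
Proof. by case/and3P: hg. Qed.
Let Qt : trivIset Q.
Proof. exact: partition_trivIset Qp. Qed.
Let Qc x : x \in cover Q.
Proof. by rewrite (cover_partition Qp). Qed.

Lemma Qself x : x \in pblock Q x.
Proof. by rewrite mem_pblock Qc. Qed.

Lemma Qne0 x : pblock Q x != set0.
Proof. by apply/set0Pn; exists x; apply: Qself. Qed.

Lemma Q_pb_eq x y : (pblock Q x == pblock Q y) = (y \in pblock Q x).
Proof. by rewrite eq_pblock. Qed.

Lemma Q_in_pb x y : y \in pblock Q x -> pblock Q y = pblock Q x.
Proof. by rewrite -Q_pb_eq => /eqP ->. Qed.

Lemma mb_le (x : 'I_n) : mb Q x <= x.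
Proof. exact: bmin_le (Qself x). Qed.

Lemma Mb_ge (x : 'I_n) : x <= Mb Q x.
Proof. exact: bmax_ge (Qself x). Qed.

Lemma mb_eq x y : (mb Q x == mb Q y) = (pblock Q x == pblock Q y).
Proof.
apply/idP/idP => [/eqP e|/eqP e]; last by rewrite /mb e.
have [u hu eu] := bmin_mem (Qne0 x).
have [u' hu' eu'] := bmin_mem (Qne0 y).
have : u = u' by apply: val_inj; rewrite /= -eu -eu'.
move=> euu; rewrite -(Q_in_pb hu) -(Q_in_pb hu') euu.
by [].
Qed.

Lemma good_sm x y : ord0 \notin pblock Q x -> mb Q x < mb Q y -> Mb Q x < Mb Q y.
Proof.
move=> h0 h; case/and3P: hg => _ _ /forallP H.
have := H (pblock Q x); rewrite pblock_mem //= => /forallP /(_ (pblock Q y)).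
by rewrite pblock_mem //= h0 h.
Qed.

Local Notation s := (phi (mb Q)).

Lemma posE v w : (s^-1 v < s^-1 w) = prec (mb Q) v w.
Proof. exact: phi_posE. Qed.

Lemma prec_mb v w : prec (mb Q) v w -> mb Q v <= mb Q w.
Proof. by case/orP => [/ltnW|/andP [/eqP -> _]]. Qed.

Lemma contig u v w : prec (mb Q) v u -> prec (mb Q) u w -> pblock Q v = pblock Q w ->
  pblock Q u = pblock Q v.
Proof.
move=> /prec_mb h1 /prec_mb h2 e.
have : mb Q v = mb Q w by rewrite /mb e.
move=> e'; apply/eqP; rewrite -mb_eq; apply/eqP; lia.
Qed.

Lemma consec (p q : 'I_n) : (q : nat) = p.+1 ->
  [/\ prec (mb Q) (s p) (s q), forall u, prec (mb Q) (s p) u -> prec (mb Q) u (s q) -> False,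
      pblock Q (s p) = pblock Q (s q) -> s q < s p &
      pblock Q (s p) != pblock Q (s q) -> s p < s q /\ (s p : nat) = mb Q (s p)].
Proof.
move=> hq.
have hpr : prec (mb Q) (s p) (s q) by rewrite -posE !permK hq.
have hbt : forall u, prec (mb Q) (s p) u -> prec (mb Q) u (s q) -> False.
  by move=> u; rewrite -!posE !permK hq; lia.
split => // [e|ne].
  by move: hpr; rewrite /prec /mb /= e ltnn eqxx.
have hlt : mb Q (s p) < mb Q (s q).
  move: hpr; rewrite /prec => /orP [] //; case/andP => /eqP e _.
  by move: ne; rewrite -mb_eq e eqxx.
have [u hu eu] := bmin_mem (Qne0 (s p)).
have pu : prec (mb Q) u (s q).
  by rewrite /prec (_ : mb Q u = mb Q (s p)) ?hlt // /mb (Q_in_pb hu).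
have eus : u = s p.
  apply/eqP; apply/negP => /negP ne'.
  case/orP: (prec_tot (mb Q) ne') => h; last by case: (hbt u h pu).
  have emu : mb Q u = mb Q (s p) by rewrite /mb (Q_in_pb hu).
  move: h; rewrite /prec emu ltnn eqxx /= => hh.
  have hmu : mb Q (s p) = u := eu.
  have := mb_le (s p); rewrite hmu; lia.
have e2 : (s p : nat) = mb Q (s p) by have hmu : mb Q (s p) = u := eu; rewrite hmu eus.
split => //; rewrite e2; exact: (leq_trans hlt (mb_le _)).
Qed.

Lemma prec_inord a b : a < n -> b < n ->
  prec (mb Q) (s (inord a)) (s (inord b)) = (a < b).
Proof. by move=> ha hb; rewrite -posE !permK !inordK. Qed.

Lemma asc_iff t : t.+1 < n ->
  asc s t = (pblock Q (s (inord t)) != pblock Q (s (inord t.+1))).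
Proof.
move=> ht.
have hq : ((inord t.+1 : 'I_n) : nat) = (inord t : 'I_n).+1 by rewrite !inordK //; lia.
have [_ _ h1 h2] := consec hq.
rewrite /asc ht /= /sv.
case: (eqVneq (pblock Q (s (inord t))) (pblock Q (s (inord t.+1)))) => e /=.
  by apply/negbTE; rewrite -leqNgt ltnW // h1.
by case: (h2 e).
Qed.

Lemma blocks_runs p d : p + d < n ->
  (pblock Q (s (inord p)) == pblock Q (s (inord (p + d)))) = (runid s p == runid s (p + d)).
Proof.
elim: d => [|d IH] h; first by rewrite !addn0 !eqxx.
have h' : p + d < n by lia.
have hq : (p + d).+1 < n by rewrite -addnS.
rewrite addnS runidS (asc_iff hq).
case: (eqVneq (pblock Q (s (inord (p + d)))) (pblock Q (s (inord (p + d).+1)))) => e /=.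
  by rewrite addn0 -e IH.
rewrite addn1; have := runid_mono s (leq_addr d p) => hm.
rewrite (_ : (runid s p == (runid s (p + d)).+1) = false); last by apply/negbTE; lia.
apply/negbTE/negP => /eqP e2.
case: d IH h h' hq e e2 hm => [|d] IH h h' hq e e2 hm.
  by rewrite !addn0 in e e2; rewrite e2 eqxx in e.
have := @contig (s (inord (p + d.+1))) (s (inord p)) (s (inord (p + d.+1).+1)).
rewrite !prec_inord //; try lia.
move=> H; have := H ltac:(lia) ltac:(lia) e2 => e3.
by move: e; rewrite e3 e2 eqxx.
Qed.

Lemma s_inord_pos x : s (inord (pos s x)) = x.
Proof. by rewrite /pos inord_val permKV. Qed.

Lemma Psi_Phi : Psi s = Q.
Proof.
rewrite -[RHS](preim_partition_pblock Qp) /Psi /preim_partition /equivalence_partition.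
apply: eq_imset => x; apply/setP => y; rewrite !inE /rid.
have hx := pos_lt s x; have hy := pos_lt s y.
case: (leqP (pos s x) (pos s y)) => h.
  have := blocks_runs (p := pos s x) (d := pos s y - pos s x); rewrite subnKC //.
  by rewrite !s_inord_pos => ->.
have := blocks_runs (p := pos s y) (d := pos s x - pos s y); rewrite subnKC; last lia.
by rewrite !s_inord_pos eq_sym [runid _ _ == _]eq_sym => ->.
Qed.

Lemma Qmax : pblock Q ord_max = [set ord_max].
Proof.
case/and3P: hg => _ hm _.
by apply: def_pblock => //; rewrite inE.
Qed.

Lemma mb_max : mb Q ord_max = m.+1.
Proof.
apply/eqP; rewrite eqn_leq; apply/andP; split.
  by have := mb_le ord_max.
rewrite /mb Qmax; apply: bmin_ge; first by apply/set0Pn; exists ord_max; rewrite inE.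
by move=> x; rewrite inE => /eqP ->.
Qed.

Lemma Phi_max : s ord_max = ord_max.
Proof.
have e : s^-1 ord_max = ord_max.
  apply: val_inj; rewrite phi_inv /= /rank.
  rewrite (eq_card (B := [set~ ord_max])); first by rewrite cardsC1 card_ord.
  move=> w; rewrite !inE /prec mb_max.
  case: (eqVneq w ord_max) => [->|ne]; first by rewrite mb_max !ltnn andbF.
  have hw : (w : nat) < m.+1.
    have := ltn_ord w; rewrite ltnS leq_eqVlt => /orP [/eqP e|] //.
    by move: ne; rewrite (_ : w = ord_max) ?eqxx //; apply: val_inj.
  by have := mb_le w; rewrite /= => h; apply/orP; left; lia.
by rewrite -{1}e permKV.
Qed.

Lemma Phi_L1 : L1 s.
Proof.
move=> i j c hj hjc hij.
have [h1 _ h2 h3] := consec hj.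
case: (eqVneq (pblock Q (s i)) (pblock Q (s j))) => e.
  by have := h2 e; lia.
have [_ ev] := h3 e.
have : prec (mb Q) (s i) (s c) by rewrite -posE !permK; lia.
rewrite /prec => /orP [h|/andP [/eqP h hh]].
  by have := mb_le (s c); lia.
by have := mb_le (s c); lia.
Qed.

Lemma Phi_L2 : L2 s.
Proof.
move=> c d i j hj hcd hdi hci hij.
rewrite ltnNge leq_eqVlt; apply/negP => /orP [/eqP e|hjd].
  have : s j = s d by apply: val_inj.
  by move/perm_inj => ejd; move: hdi; rewrite -ejd hj; lia.
have [hab _ h2 h3] := consec hj.
have ne : pblock Q (s i) != pblock Q (s j).
  by apply/negP => /eqP e; have := h2 e; lia.
have [_ ea] := h3 ne.
have hMb : Mb Q (s j) = s j.
  apply/eqP; rewrite eqn_leq Mb_ge andbT; apply: bmax_le => u hu.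
  rewrite leqNgt; apply/negP => hlt.
  have pu : prec (mb Q) u (s j).
    by rewrite /prec /mb (Q_in_pb hu) ltnn eqxx /= hlt.
  move: pu; rewrite -posE permK => hpu.
  have e1 := Q_in_pb hu.
  case: (eqVneq u (s i)) => [eu|neu].
    by move: ne; rewrite -e1 eu eqxx.
  have hpu' : s^-1 u < i.
    rewrite ltn_neqAle; apply/andP; split; last by rewrite -ltnS -hj.
    by apply/negP => /eqP e; move/eqP: neu; apply; rewrite -(permKV s u); congr (s _); exact: val_inj.
  have := @contig (s i) u (s j).
  rewrite -!posE !permK => H.
  have := H hpu' ltac:(lia) e1 => e2.
  by move: ne; rewrite e2 e1 eqxx.
have pxa : prec (mb Q) (s c) (s i) by rewrite -posE !permK; lia.
have hxa : mb Q (s c) < mb Q (s i).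
  by move: pxa; rewrite /prec => /orP [] // /andP [_ hh]; lia.
have pxy : prec (mb Q) (s c) (s d) by rewrite -posE !permK; lia.
have pya : prec (mb Q) (s d) (s i) by rewrite -posE !permK; lia.
have hxy : mb Q (s c) < mb Q (s d).
  by move: pxy; rewrite /prec => /orP [] // /andP [_ hh]; lia.
have hya := prec_mb pya.
have hab' : mb Q (s i) < mb Q (s j).
  move: hab; rewrite /prec => /orP [] // /andP [/eqP hh _].
  by move: ne; rewrite -mb_eq hh eqxx.
have h0 : ord0 \notin pblock Q (s d).
  apply/negP => h0; have := mb_le ord0; rewrite /mb (Q_in_pb h0) -/(mb Q (s d)) /=; lia.
have := good_sm h0 (leq_ltn_trans hya hab'); rewrite hMb.
have := Mb_ge (s d); lia.
Qed.

Lemma Phi_R : s \in Rset m.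
Proof. by rewrite inE Phi_max eqxx /=; apply: B3; [exact: Phi_max | exact: Phi_L1 | exact: Phi_L2]. Qed.

End PhiSide.

Lemma card_good_R m : #|[set Q : {set {set 'I_m.+2}} | good Q]| = #|Rset m|.
Proof.
have -> : Rset m = (fun Q => phi (mb Q)) @: [set Q : {set {set 'I_m.+2}} | good Q].
  apply/setP => s; apply/idP/imsetP.
  - rewrite inE => /andP [/eqP hs hc].
    have l1 := B1 hs hc; have l2 := B2 hc.
    exists (Psi s); first by rewrite inE Psi_good.
    by rewrite Phi_Psi.
  - by case=> Q; rewrite inE => hg ->; apply: Phi_R.
rewrite card_in_imset // => Q1 Q2; rewrite !inE => h1 h2 e.
by rewrite -(Psi_Phi h1) -(Psi_Phi h2) /= e.
Qed.

End PartAC.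
Import PartAC.

Section PartD1.
Variable m : nat.
Local Notation n := m.+2.

Definition Sset : {set 'I_n} := ~: [set ord0; ord_max].

Definition Tset := [set P : {set {set 'I_n}} |
  (cover P \subset Sset) && partition P (cover P) && strongly_monotone P].

Definition B0 (P : {set {set 'I_n}}) := ~: cover P :\ ord_max.
Definition G (P : {set {set 'I_n}}) := B0 P |: ([set ord_max] |: P).
Definition F (Q : {set {set 'I_n}}) := Q :\ pblock Q ord0 :\ [set ord_max].

Lemma ord0_max : (ord0 : 'I_n) != ord_max.
Proof. by []. Qed.

Lemma in_S x : (x \in Sset) = (x != ord0) && (x != ord_max).
Proof. by rewrite !inE negb_or. Qed.

Section T.
Variable P : {set {set 'I_n}}.
Hypothesis hT : P \in Tset.

Let hS : cover P \subset Sset.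
Proof. by move: hT; rewrite inE => /andP [/andP []]. Qed.
Let hP : partition P (cover P).
Proof. by move: hT; rewrite inE => /andP [/andP []]. Qed.
Let hsm : strongly_monotone P.
Proof. by move: hT; rewrite inE => /andP []. Qed.

Lemma notcov0 : ord0 \notin cover P.
Proof. by apply/negP => /(subsetP hS); rewrite in_S eqxx. Qed.
Lemma notcovmax : ord_max \notin cover P.
Proof. by apply/negP => /(subsetP hS); rewrite in_S eqxx andbF. Qed.

Lemma B0_0 : ord0 \in B0 P.
Proof. by rewrite !inE ord0_max notcov0. Qed.

Lemma B0_notin : B0 P \notin P.
Proof.
apply/negP => h; have := notcov0; rewrite /cover; move/negP; apply.
by apply/bigcupP; exists (B0 P) => //; exact: B0_0.
Qed.

Lemma max_notin : [set ord_max] \notin P.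
Proof.
apply/negP => h; have := notcovmax; move/negP; apply.
by apply/bigcupP; exists [set ord_max] => //; rewrite inE.
Qed.

Lemma B0_neq_max : B0 P != [set ord_max].
Proof. by apply/negP => /eqP e; have := B0_0; rewrite e inE. Qed.

Lemma G_partition : partition (G P) [set: 'I_n].
Proof.
have h1 : partition ([set ord_max] |: P) ([set ord_max] :|: cover P).
  apply: partitionU1 => //; first by apply/set0Pn; exists ord_max; rewrite inE.
  by rewrite disjoints1 notcovmax.
have h2 := partitionU1 h1 (_ : B0 P != set0).
have e : B0 P :|: ([set ord_max] :|: cover P) = [set: 'I_n].
  apply/setP => x; rewrite !inE; case: (x == ord_max); first by rewrite orbT.
  by rewrite /= orbC orbN.
rewrite /G -e; apply: h2.
  by apply/set0Pn; exists ord0; exact: B0_0.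
rewrite -setI_eq0; apply/eqP/setP => x; rewrite !inE.
by case: (x == ord_max); case: (x \in cover P).
Qed.

Lemma pblock_G0 : pblock (G P) ord0 = B0 P.
Proof.
apply: def_pblock; first exact: partition_trivIset G_partition.
  by rewrite !inE eqxx.
exact: B0_0.
Qed.

Lemma FG : F (G P) = P.
Proof.
rewrite /F pblock_G0 /G; apply/setP => B; rewrite !inE.
case: (eqVneq B (B0 P)) => [->|ne1]; first by rewrite /= andbF (negbTE B0_notin).
case: (eqVneq B [set ord_max]) => [->|ne2] //=.
by rewrite (negbTE max_notin).
Qed.

Lemma bmin_max : bmin [set ord_max : 'I_n] = m.+1.
Proof.
apply/eqP; rewrite eqn_leq (bmin_le (_ : ord_max \in _)) ?inE //=.
by apply: bmin_ge; [apply/set0Pn; exists ord_max; rewrite inE | move=> x; rewrite inE => /eqP ->].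
Qed.

Lemma bmax_max : bmax [set ord_max : 'I_n] = m.+1.
Proof.
apply/eqP; rewrite eqn_leq (bmax_ge (_ : ord_max \in _)) ?inE // andbT.
by apply: bmax_le => x; rewrite inE => /eqP ->.
Qed.

Lemma G_good : good (G P).
Proof.
rewrite /good G_partition /= !inE eqxx orbT /=.
apply/forallP => B; apply/implyP => hB; apply/forallP => C; apply/implyP => hC.
apply/implyP => /andP [h0 h].
have hpart := G_partition.
have neC : C != set0 by apply: partition_neq0 hpart hC.
move: hB hC; rewrite !inE.
case: (eqVneq B (B0 P)) => [eB|_]; first by move: h0; rewrite eB B0_0.
case: (eqVneq B [set ord_max]) => [eB|_] /= hB.
  have [x _ ex] := bmin_mem neC; move: h; rewrite eB bmin_max ex.
  by have := ltn_ord x; lia.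
have hBS : forall x, x \in B -> (x : nat) < m.+1.
  move=> x xB; have : x \in Sset by apply: (subsetP hS); apply/bigcupP; exists B.
  rewrite in_S => /andP [_ hx]; have := ltn_ord x; rewrite ltnS leq_eqVlt => /orP [/eqP e|//].
  by move: hx; rewrite (_ : x = ord_max) ?eqxx //; apply: val_inj.
case: (eqVneq C (B0 P)) => [eC|_] /=.
  by move: h; have := bmin_le B0_0; rewrite -eC /=; lia.
case: (eqVneq C [set ord_max]) => [eC|_] /= hC.
  by rewrite eC bmax_max; apply: (leq_ltn_trans (bmax_le hBS)); rewrite ltnSn.
by move/forallP: hsm => /(_ B); rewrite hB /= => /forallP /(_ C); rewrite hC /= h.
Qed.

End T.

Section Q.
Variable Q : {set {set 'I_n}}.
Hypothesis hg : good Q.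

Let hp : partition Q [set: 'I_n].
Proof. by case/and3P: hg. Qed.
Let ht : trivIset Q.
Proof. exact: partition_trivIset hp. Qed.
Let hmax : [set ord_max] \in Q.
Proof. by case/and3P: hg. Qed.
Let hcov x : x \in cover Q.
Proof. by rewrite (cover_partition hp). Qed.

Lemma pb_max : pblock Q ord_max = [set ord_max].
Proof. by apply: def_pblock => //; rewrite inE. Qed.

Lemma b0_in : pblock Q ord0 \in Q.
Proof. exact: pblock_mem. Qed.

Lemma b0_0 : ord0 \in pblock Q ord0.
Proof. by rewrite mem_pblock. Qed.

Lemma b0_neq : pblock Q ord0 != [set ord_max].
Proof. by apply/negP => /eqP e; have := b0_0; rewrite e inE. Qed.

Lemma F_sub : F Q \subset Q.
Proof. by apply/subsetP => B; rewrite !inE => /and3P []. Qed.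

Lemma inF_pb B x : B \in F Q -> x \in B ->
  [/\ B = pblock Q x, B \in Q, B != pblock Q ord0 & B != [set ord_max]].
Proof.
rewrite !inE => /and3P [h1 h2 h3] hx.
by split => //; apply/esym/def_pblock.
Qed.

Lemma F_T : F Q \in Tset.
Proof.
rewrite inE -andbA; apply/and3P; split.
- apply/subsetP => x /bigcupP [B hB hx]; have [e _ n1 n2] := inF_pb hB hx.
  rewrite in_S; apply/andP; split; apply/negP => /eqP ex; subst x.
    by move: n1; rewrite e eqxx.
  by move: n2; rewrite e pb_max eqxx.
- rewrite /partition eqxx /= (trivIsetS F_sub ht) /=.
  by apply/negP => /(subsetP F_sub); rewrite (partition0 hp).
- apply/forallP => B; apply/implyP => hB; apply/forallP => C; apply/implyP => hC.
  apply/implyP => h.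
  have hBQ := subsetP F_sub _ hB; have hCQ := subsetP F_sub _ hC.
  case/and3P: hg => _ _ /forallP /(_ B); rewrite hBQ /= => /forallP /(_ C); rewrite hCQ h /= andbT.
  move/implyP; apply; apply/negP => h0; have [e _ n1 _] := inF_pb hB h0.
  by move: n1; rewrite e eqxx.
Qed.

Lemma B0F : B0 (F Q) = pblock Q ord0.
Proof.
apply/setP => x; rewrite !inE.
apply/idP/idP => [/andP [hx hc]|hx].
  have hb := pblock_mem (hcov x).
  case: (eqVneq (pblock Q x) (pblock Q ord0)) => [e|ne].
    by rewrite -e mem_pblock.
  case: (eqVneq (pblock Q x) [set ord_max]) => [e|ne2].
    by move: hx; have := mem_pblock Q x; rewrite e hcov inE => /eqP ->; rewrite eqxx.
  move/negP: hc; case; apply/bigcupP; exists (pblock Q x); last by rewrite mem_pblock.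
  by rewrite !inE ne ne2.
apply/andP; split.
  apply/negP => /eqP ex; move: hx; rewrite ex => hx.
  have := def_pblock ht b0_in hx; rewrite pb_max => e.
  by move: b0_neq; rewrite e eqxx.
apply/negP => /bigcupP [B hB hxB]; have [e _ n1 _] := inF_pb hB hxB.
by move: n1; rewrite e (def_pblock ht b0_in hx) eqxx.
Qed.

Lemma GF : G (F Q) = Q.
Proof.
rewrite /G B0F; apply/setP => B; rewrite !inE.
case: (eqVneq B (pblock Q ord0)) => [->|ne1] /=; first by rewrite b0_in.
by case: (eqVneq B [set ord_max]) => [->|ne2] /=.
Qed.

End Q.

Lemma card_good_T : #|[set Q : {set {set 'I_n}} | good Q]| = #|Tset|.
Proof.
have -> : [set Q : {set {set 'I_n}} | good Q] = G @: Tset.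
  apply/setP => Q; rewrite inE; apply/idP/imsetP => [hg|[P hP ->]]; last exact: G_good.
  by exists (F Q); [apply: F_T | rewrite GF].
rewrite card_in_imset // => P1 P2 h1 h2 e.
by rewrite -(FG h1) -(FG h2) e.
Qed.

End PartD1.

Section Relabel.
Variable N : nat.
Variable U : {set 'I_N}.
Local Notation r := #|U|.

Definition g (i : 'I_r) : 'I_N := enum_val i.

Lemma g_inj : injective g.
Proof. exact: enum_val_inj. Qed.

Lemma g_mono (i j : 'I_r) : i < j -> g i < g j.
Proof.
move=> h.
have inc : sorted ltn (map val (enum U)).
  rewrite -[enum _](eq_filter (mem_enum _)).
  rewrite -(eq_filter (mem_map val_inj _)) -filter_map.
  by rewrite (sorted_filter ltn_trans) // unlock val_ord_enum iota_ltn_sorted.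
have hs : size (map val (enum U)) = r by rewrite size_map -cardE.
have := sorted_ltn_nth ltn_trans 0 inc.
move=> H; have := H i j; rewrite !inE hs !ltn_ord => H'; have := H' erefl erefl h.
by rewrite /g !(enum_val_nth (g i)) !(nth_map (g i)) // -cardE ltn_ord.
Qed.

Lemma g_le (i j : 'I_r) : (g i < g j) = (i < j).
Proof.
apply/idP/idP => [h|]; last exact: g_mono.
rewrite ltnNge; apply/negP; rewrite leq_eqVlt => /orP [/eqP e|/g_mono]; last lia.
by move: h; rewrite (_ : j = i) ?ltnn //; apply: val_inj.
Qed.

Lemma g_img : g @: [set: 'I_r] = U.
Proof.
apply/eqP; rewrite eqEcard card_imset ?cardsT ?card_ord ?leqnn ?andbT; last exact: g_inj.
by apply/subsetP => x /imsetP [i _ ->]; exact: enum_valP.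
Qed.

Lemma gmin (B : {set 'I_r}) : B != set0 ->
  exists2 u : 'I_r, bmin B = u & bmin (g @: B) = g u.
Proof.
move=> h; have [u uB eu] := bmin_mem h; exists u => //.
apply/eqP; rewrite eqn_leq (bmin_le (imset_f g uB)) /=.
apply: bmin_ge; first by apply/set0Pn; exists (g u); exact: imset_f.
move=> x /imsetP [y yB ->]; have := bmin_le yB; rewrite eu leq_eqVlt => /orP [/eqP e|/g_mono h'].
  by rewrite (_ : y = u) //; apply: val_inj.
exact: ltnW.
Qed.

Lemma gmax (B : {set 'I_r}) : B != set0 ->
  exists2 u : 'I_r, bmax B = u & bmax (g @: B) = g u.
Proof.
move=> h; have [u uB eu] := bmax_mem h; exists u => //.
apply/eqP; rewrite eqn_leq (bmax_ge (imset_f g uB)) andbT.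
apply: bmax_le => x /imsetP [y yB ->]; have := bmax_ge yB; rewrite eu leq_eqVlt => /orP [/eqP e|/g_mono h'].
  by rewrite (_ : y = u) //; apply: val_inj.
exact: ltnW.
Qed.

Definition Fr (P : {set {set 'I_r}}) : {set {set 'I_N}} := [set g @: (B : {set 'I_r}) | B in P].

Lemma Fr_inj : injective Fr.
Proof. exact: imset_inj (imset_inj g_inj). Qed.

Lemma Fr_sm (P : {set {set 'I_r}}) : set0 \notin P -> strongly_monotone (Fr P) = strongly_monotone P.
Proof.
move=> h0.
have key : forall B C : {set 'I_r}, B \in P -> C \in P ->
   ((bmin (g @: B) < bmin (g @: C)) ==> (bmax (g @: B) < bmax (g @: C))) =
   ((bmin B < bmin C) ==> (bmax B < bmax C)).
  move=> B C hB hC.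
  have nB : B != set0 by apply: contraNneq h0 => <-.
  have nC : C != set0 by apply: contraNneq h0 => <-.
  have [u1 e1 f1] := gmin nB; have [u2 e2 f2] := gmin nC.
  have [v1 e3 f3] := gmax nB; have [v2 e4 f4] := gmax nC.
  by rewrite f1 f2 f3 f4 e1 e2 e3 e4 !g_le.
apply/forallP/forallP => H B.
  apply/implyP => hB; apply/forallP => C; apply/implyP => hC.
  have := H (g @: B); rewrite imset_f // => /forallP /(_ (g @: C)); rewrite imset_f //=.
  by rewrite key.
apply/implyP => /imsetP [B' hB' ->]; apply/forallP => C; apply/implyP => /imsetP [C' hC' ->].
rewrite key //; have := H B'; rewrite hB' /= => /forallP /(_ C'); rewrite hC'; done.
Qed.

Lemma card_relabel :
  #|[set P : {set {set 'I_N}} | partition P U && strongly_monotone P]| = A_sm r.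
Proof.
rewrite /A_sm -(card_imset _ Fr_inj); apply: eq_card => P; rewrite inE.
apply/idP/imsetP => [/andP [hp hsm]|[P' ]]; last first.
  rewrite inE => /andP [hp hsm] ->.
  rewrite -{1}g_img imset_partition ?hp //=; last exact: g_inj.
  by rewrite Fr_sm // (partition0 hp).
pose P' : {set {set 'I_r}} := [set g @^-1: (B : {set 'I_N}) | B in P].
have gpre : forall B, B \in P -> g @: (g @^-1: B) = B.
  move=> B hB; apply/setP => x; apply/imsetP/idP => [[y]|hx]; first by rewrite inE => hy ->.
  have : x \in g @: [set: 'I_r] by rewrite g_img; apply: (subsetP (partitionS hp hB)).
  by case/imsetP => y _ ex; exists y => //; rewrite inE -ex.
have hFP : Fr P' = P.
  rewrite /Fr /P'; apply/setP => B; apply/imsetP/idP => [[B1 /imsetP [B' hB' ->] ->]|hB].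
    by rewrite gpre.
  by exists (g @^-1: B); [apply: imset_f | rewrite gpre].
exists P' => //; rewrite inE.
have hp' : partition P' [set: 'I_r].
  by rewrite -(imset_partition _ _ g_inj) g_img -/(Fr P') hFP.
rewrite hp' /= -Fr_sm ?hFP //; by rewrite (partition0 hp').
Qed.

End Relabel.

Section PartD4.
Variable m : nat.
Local Notation n := m.+2.

Lemma card_S : #|Sset m| = m.
Proof.
have := cardsC [set (ord0 : 'I_n); ord_max]; rewrite cards2 card_ord /Sset.
by rewrite ord0_max /= => /eqP; rewrite -[n]/(2 + m) eqn_add2l => /eqP.
Qed.

Lemma card_T_sum : #|Tset m| = \sum_(i < m.+1) 'C(m, i) * A_sm i.
Proof.
rewrite -sum1_card (partition_big (fun P => cover P) (fun U => U \subset Sset m)) /=; last first.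
  by move=> P; rewrite inE => /andP [/andP [h _] _].
have step : forall U : {set 'I_n}, U \subset Sset m ->
    \sum_(P in Tset m | cover P == U) 1 = A_sm #|U|.
  move=> U hU; rewrite -(card_relabel U) -sum1_card; apply: eq_bigl => P.
  rewrite !inE; apply/idP/idP => [/andP [/andP [/andP [h1 h2] h3] /eqP e]|/andP [h1 h2]].
    by rewrite -e h2 h3.
  have e := cover_partition h1.
  by rewrite e hU /= h1 h2 eqxx.
transitivity (\sum_(U : {set 'I_n} | U \subset Sset m) A_sm #|U|).
  by apply: eq_bigr => U hU; apply: step.
rewrite (partition_big (fun U : {set 'I_n} => (inord #|U| : 'I_m.+1)) xpredT) //=.
apply: eq_bigr => j _.
have hle : forall U : {set 'I_n}, U \subset Sset m -> #|U| <= m.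
  by move=> U hU; rewrite (leq_trans (subset_leq_card hU)) // card_S.
transitivity (\sum_(U in [set U : {set 'I_n} | (U \subset Sset m) & (#|U| == j)]) A_sm j).
  apply: eq_big => U; first by rewrite inE; case hU: (U \subset Sset m) => //=; rewrite -val_eqE /= inordK // ltnS hle.
  by case/andP => hU /eqP e; rewrite -e inordK // ltnS hle.
by rewrite sum_nat_const cards_draws card_S.
Qed.


End PartD4.

Theorem theorem5p12 (n : nat) (hn : 2 <= n) :
  #|Av_cyc n| = \sum_(i < n.-1) 'C(n - 2, i) * A_sm i.
Proof.
case: n hn => [|[|m]] // _.
rewrite card_Av -card_good_R card_good_T card_T_sum /=.
by rewrite !subSS subn0.
Qed.
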